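(* Let $\Sigma$ be a finite alphabet, $L \subseteq \Sigma^*$ regular, and $\mathcal{A}=(Q,\Sigma,q_0,\delta,F)$ its minimal DFA. Then $L\in\mathsf{F}(\mathcal{O}(1))$ if and only if for all $x,y \in \Sigma^*$ with $|x|=|y|$ and all $z \in \Sigma^{|Q|}$ we have $\mathcal{A}(xz) = \mathcal{A}(yz)$.
   Context: $\mathcal{A}(w)=\delta(q_0,w)$ denotes the state reached on input $w$. Fix $a\in\Sigma$; $\mathrm{last}_n(a_1\cdots a_m)=a_{m-n+1}\cdots a_m$ if $n\le m$, else $a^{n-m}a_1\cdots a_m$. A fixed-size sliding window algorithm for $L$ is a sequence $(\mathcal{A}_n)_{n\ge0}$ of deterministic (possibly infinite-state) automata with injective encodings of states into bit strings, $\mathcal{A}_n$ accepting $\{w:\mathrm{last}_n(w)\in L\}$; its space complexity at $n$ is the maximal encoding length of a state of $\mathcal{A}_n$. $\mathsf{F}(\mathcal{O}(1))$ is the class of languages having such an algorithm with constant space complexity. *)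

(* Defs.v *)
From mathcomp Require Import all_boot.
Set Implicit Arguments. Unset Strict Implicit. Unset Printing Implicit Defensive.

Record dfa (Sigma : finType) := DFA {
  dstate : finType;
  dinit : dstate;
  ddelta : dstate -> Sigma -> dstate;
  dfinal : pred dstate }.

Definition drun (Sigma : finType) (A : dfa Sigma) (w : seq Sigma) : dstate A :=
  foldl (@ddelta Sigma A) (dinit A) w.

Definition dfa_accepts (Sigma : finType) (A : dfa Sigma) (L : seq Sigma -> Prop) :=
  forall w, dfinal (drun A w) <-> L w.

Definition minimal_dfa (Sigma : finType) (A : dfa Sigma) (L : seq Sigma -> Prop) :=
  dfa_accepts A L /\
  forall B : dfa Sigma, dfa_accepts B L -> #|dstate A| <= #|dstate B|.

Definition lastn (Sigma : Type) (a : Sigma) (n : nat) (w : seq Sigma) : seq Sigma :=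
  if n <= size w then drop (size w - n) w else nseq (n - size w) a ++ w.

Record enc_aut (Sigma : Type) := EncAut {
  astate : Type;
  ainit : astate;
  adelta : astate -> Sigma -> astate;
  afinal : astate -> Prop;
  aenc : astate -> seq bool;
  aenc_inj : injective aenc }.

Definition arun (Sigma : Type) (A : enc_aut Sigma) (w : seq Sigma) : astate A :=
  foldl (@adelta Sigma A) (ainit A) w.

Definition sliding_window_alg (Sigma : Type) (a : Sigma) (L : seq Sigma -> Prop)
    (A : nat -> enc_aut Sigma) :=
  forall n w, afinal (arun (A n) w) <-> L (lastn a n w).

Definition space_le (Sigma : Type) (A : nat -> enc_aut Sigma) (n c : nat) :=
  forall s : astate (A n), size (aenc s) <= c.

Definition F_O1 (Sigma : Type) (a : Sigma) (L : seq Sigma -> Prop) :=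
  exists A : nat -> enc_aut Sigma, sliding_window_alg a L A /\
    exists c n0, forall n, n0 <= n -> space_le A n c.

(* Main.v *)
Require Import Defs.
From mathcomp Require Import all_boot zify.
From Stdlib Require Import Classical.
Set Implicit Arguments. Unset Strict Implicit. Unset Printing Implicit Defensive.

Fixpoint Rk (X S : Type) (step : X -> S -> X) (R0 : X -> X -> Prop) (i : nat)
  (p q : X) : Prop :=
  match i with
  | 0 => R0 p q
  | i'.+1 => forall s, Rk step R0 i' (step p s) (step q s)
  end.

Lemma Rk_refl X S (step : X -> S -> X) R0 :
  (forall p, R0 p p) -> forall i p, Rk step R0 i p p.
Proof. move=> h; elim=> [|i IH] p //=. Qed.

Lemma Rk_sym X S (step : X -> S -> X) R0 :
  (forall p q, R0 p q -> R0 q p) -> forall i p q, Rk step R0 i p q -> Rk step R0 i q p.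
Proof. move=> h; elim=> [|i IH] p q /=; first exact: h. by move=> H s; apply: IH. Qed.

Lemma Rk_trans X S (step : X -> S -> X) R0 :
  (forall p q r, R0 p q -> R0 q r -> R0 p r) ->
  forall i p q r, Rk step R0 i p q -> Rk step R0 i q r -> Rk step R0 i p r.
Proof. move=> h; elim=> [|i IH] p q r /=; first exact: h. by move=> H1 H2 s; apply: IH (H1 s) (H2 s). Qed.

Lemma Rk_mono X S (step : X -> S -> X) R0 :
  (forall p q s, R0 p q -> R0 (step p s) (step q s)) ->
  forall i p q, Rk step R0 i p q -> Rk step R0 i.+1 p q.
Proof. move=> h; elim=> [|i IH] p q /=; first by move=> H s; apply: h.
by move=> H s; apply: IH. Qed.

Lemma Rk_mono_le X S (step : X -> S -> X) R0 :
  (forall p q s, R0 p q -> R0 (step p s) (step q s)) ->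
  forall i k p q, Rk step R0 i p q -> Rk step R0 (i + k) p q.
Proof. move=> h i; elim=> [|k IH] p q H; first by rewrite addn0.
rewrite addnS; apply: Rk_mono => //; exact: IH. Qed.

Lemma Rk_char X S (step : X -> S -> X) R0 i p q :
  Rk step R0 i p q <-> forall u, size u = i -> R0 (foldl step p u) (foldl step q u).
Proof.
elim: i p q => [|i IH] p q /=.
  split; first by move=> H [|s u] //.
  by move=> H; apply: (H [::]).
split.
  move=> H [|s u] //= [Hu]; by apply/(IH _ _).1.
move=> H s; apply/IH => u Hu; apply: (H (s :: u)) => /=; by rewrite Hu.
Qed.

Lemma chain X S (step : X -> S -> X) R0 (M : nat) :
  (forall p, R0 p p) ->
  (forall p q, R0 p q -> R0 q p) ->
  (forall p q r, R0 p q -> R0 q r -> R0 p r) ->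
  (forall p q s, R0 p q -> R0 (step p s) (step q s)) ->
  (forall f : nat -> X, exists a b, a < b <= M /\ R0 (f a) (f b)) ->
  forall j p q, Rk step R0 j p q -> Rk step R0 M p q.
Proof.
move=> Hr Hs Ht Hc Hb j p q Hj.
apply: NNPP => HnM.
pose stable i := forall a b, Rk step R0 i.+1 a b -> Rk step R0 i a b.
have stab_up : forall i k, stable i -> stable (i + k).
  move=> i; elim=> [|k IH] H; first by rewrite addn0.
  rewrite addnS => a b /= Hab s; apply: (IH H); exact: Hab.
have down : forall i k a b, stable i -> Rk step R0 (i + k) a b -> Rk step R0 i a b.
  move=> i; elim=> [|k IH] a b H; first by rewrite addn0.
  rewrite addnS => Hab; apply: IH => //; apply: (stab_up i k H); exact: Hab.
have nstab : forall i, i <= M -> ~ stable i.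
  move=> i iM Hst; apply: HnM.
  have -> : M = i + (M - i) by lia.
  apply: Rk_mono_le => //.
  case: (leqP j i) => ji.
    have -> : i = j + (i - j) by lia.
    by apply: Rk_mono_le.
  apply: (down i (j - i)) => //; by have <- : j = i + (j - i) by lia.
pose Fam i k := exists f : nat -> X, forall a b, a < k -> b < k -> a <> b ->
   ~ Rk step R0 i (f a) (f b).
have famstep : forall i k, ~ stable i -> Fam i.+1 k -> Fam i k.+1.
  move=> i k Hns [f Hf].
  have [a [b [Hab Hnab]]] : exists a b, Rk step R0 i.+1 a b /\ ~ Rk step R0 i a b.
    apply: NNPP => Hn; apply: Hns => a b Hab; apply: NNPP => Hn2; apply: Hn.
    by exists a, b.
  have Hmi := Rk_mono Hc (i:=i).
  have Hsy := Rk_sym (step:=step) Hs (i:=i.+1). have Htr := Rk_trans (step:=step) Ht (i:=i.+1).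
  case: (classic (exists t, t < k /\ Rk step R0 i.+1 a (f t))) => [[t [tk Ht']]|Hno].
    exists (fun idx => if idx == t then a else if idx == k then b else f idx).
    move=> x y xk yk xy.
    case: (eqVneq x t) => [Ex|xt]; case: (eqVneq y t) => [Ey|yt] //=; try subst x; try subst y.
    - by move: xy.
    - case: (eqVneq y k) => [Ey|yk'] /=.
        exact: Hnab.
      move=> H; have Hy : y < k by lia.
      apply: (Hf t y tk Hy (nesym (elimN eqP yt))).
      apply: (Htr _ _ _ (Hsy _ _ Ht')); apply: Hmi; exact: H.
    - case: (eqVneq x k) => [Ex|xk'] /=.
        move=> H; apply: Hnab; exact: (Rk_sym (step:=step) Hs).
      move=> H; have Hx : x < k by lia.
      apply: (Hf x t Hx tk (elimN eqP xt)).
      exact: (Htr _ _ _ (Hmi _ _ H) Ht').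
    - case: (eqVneq x k) => [Ex|xk'] /=; case: (eqVneq y k) => [Ey|yk'] //=; try subst x; try subst y.
      + by move: xy.
      + move=> H; have Hy : y < k by lia.
        apply: (Hf t y tk Hy (nesym (elimN eqP yt))).
        apply: (Htr _ _ _ (Hsy _ _ Ht')); apply: (Htr _ _ _ Hab); apply: Hmi; exact: H.
      + move=> H; have Hx : x < k by lia.
        apply: (Hf x t Hx tk (elimN eqP xt)).
        apply: (Htr _ _ _ (Hmi _ _ H)); exact: (Htr _ _ _ (Hsy _ _ Hab) Ht').
      + move=> H; have Hx : x < k by lia. have Hy : y < k by lia.
        apply: (Hf x y Hx Hy xy); exact: Hmi.
  exists (fun idx => if idx == k then a else f idx).
  move=> x y xk yk xy.
  case: (eqVneq x k) => [Ex|xk'] /=; case: (eqVneq y k) => [Ey|yk'] //=; try subst x; try subst y.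
  - by move: xy.
  - move=> H; have Hy : y < k by lia. apply: Hno; exists y; split => //.
    apply: Hmi; exact: H.
  - move=> H; have Hx : x < k by lia. apply: Hno; exists x; split => //.
    apply: Hmi; exact: (Rk_sym (step:=step) Hs H).
  - move=> H; have Hx : x < k by lia. have Hy : y < k by lia.
    apply: (Hf x y Hx Hy xy); exact: Hmi.
have fam : forall d, d <= M.+1 -> Fam (M.+1 - d) d.+1.
  elim=> [|d IH] Hd.
    exists (fun _ => p) => x y; lia.
  rewrite (_ : M.+1 - d = (M.+1 - d.+1).+1) in IH; last by lia.
  apply: famstep; last by apply: IH; lia.
  apply: nstab; lia.
have [f Hf] := fam M.+1 (leqnn _).
rewrite subnn in Hf.
have [x [y [/andP [xy yM] H]]] := Hb f.
apply: (Hf x y) => //; lia.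
Qed.

Lemma lastn_char (T : Type) (a : T) n w : lastn a n w = drop (size w) (nseq n a ++ w).
Proof.
rewrite /lastn drop_cat size_nseq.
by case: leqP => h //; rewrite drop_nseq.
Qed.

Lemma size_lastn (T : Type) (a : T) n w : size (lastn a n w) = n.
Proof. rewrite lastn_char size_drop size_cat size_nseq; lia. Qed.

Lemma lastn_id (T : Type) (a : T) w : lastn a (size w) w = w.
Proof. by rewrite /lastn leqnn subnn drop0. Qed.

Lemma lastn_cat_long (T : Type) (a : T) n w u :
  n <= size u -> lastn a n (w ++ u) = lastn a n u.
Proof.
move=> h; rewrite /lastn size_cat h.
have -> : n <= size w + size u by lia.
rewrite drop_cat.
have -> : (size w + size u - n < size w) = false by apply/negbTE; lia.
congr drop; lia.
Qed.

Lemma lastn_rcons (T : Type) (a : T) K w c :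
  lastn a K (rcons w c) = behead (rcons (lastn a K w) c).
Proof.
case: K => [|K].
  by rewrite /lastn !leq0n !subn0 !drop_size.
rewrite !lastn_char size_rcons -drop1 -rcons_cat drop_rcons ?drop_rcons ?drop_drop ?add1n //.
  rewrite size_drop size_cat size_nseq; lia.
rewrite size_cat size_nseq; lia.
Qed.

Lemma lastn_split (T : Type) (a : T) K n w :
  K <= n -> drop (n - K) (lastn a n w) = lastn a K w.
Proof.
move=> h; have [m ->] : exists m, n = m + K by exists (n - K); lia.
rewrite !lastn_char drop_drop addnK nseqD -catA drop_cat size_nseq.
rewrite ifN; last by lia.
congr drop; lia.
Qed.

Lemma foldl_rcons_cat (T : Type) (w u : seq T) : foldl (@rcons T) w u = w ++ u.
Proof. elim: u w => [|x u IH] w /=; first by rewrite cats0. by rewrite IH cat_rcons. Qed.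

Lemma min_nerode (Sigma : finType) (A : dfa Sigma) L (p q : dstate A) :
  minimal_dfa A L ->
  (forall v, dfinal (foldl (@ddelta _ A) p v) <-> dfinal (foldl (@ddelta _ A) q v)) ->
  p = q.
Proof.
move=> [acc minA] Hpq; apply: NNPP => npq.
pose Ner (r s : dstate A) := forall v, dfinal (foldl (@ddelta _ A) r v) <-> dfinal (foldl (@ddelta _ A) s v).
have Ncong : forall r s c, Ner r s -> Ner (ddelta r c) (ddelta s c).
  by move=> r s c H v; apply: (H (c :: v)).
have Nsym : forall r s, Ner r s -> Ner s r by move=> r s H v; split => /H.
have Ntr : forall r s t, Ner r s -> Ner s t -> Ner r t.
  by move=> r s t H1 H2 v; split => [/H1/H2|/H2/H1].
pose f (t : dstate A) := if t == p then q else t.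
have fP : forall t, f t != p.
  move=> t; rewrite /f; case: (eqVneq t p) => [_|] //=; apply/eqP => e; apply: npq; by rewrite e.
have fN : forall t, Ner (f t) t.
  move=> t; rewrite /f; case: (eqVneq t p) => [->|_] //=; exact: Nsym.
pose T := {r : dstate A | r != p}.
pose g (t : dstate A) : T := exist _ (f t) (fP t).
pose B := @DFA Sigma {r : dstate A | r != p} (g (dinit A)) (fun r c => g (ddelta (val r) c))
   (fun r => dfinal (val r)).
have inv : forall w (r : T) s, Ner (val r) s ->
   Ner (val (foldl (@ddelta _ B) r w)) (foldl (@ddelta _ A) s w).
  elim=> [|c w IH] r s H //=.
  apply: IH => /=. apply: Ntr (fN _) _; exact: Ncong.
have accB : dfa_accepts B L.
  move=> w; rewrite -acc /drun.
  have := inv w (g (dinit A)) (dinit A) (fN _).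
  by move=> /(_ [::]) /=.
have := minA B accB.
rewrite /= card_sig.
have -> : #|[pred x | x != p]| = #|predC1 p| by apply: eq_card.
rewrite cardC1.
have : 0 < #|dstate A| by apply/card_gt0P; exists p.
case: #|dstate A| => [//|n] _ /=; by rewrite ltnn.
Qed.

Fixpoint code (bs : seq bool) : nat :=
  if bs is b :: bs' then nat_of_bool b + 2 * code bs' else 1.

Lemma code_gt0 bs : 0 < code bs.
Proof. elim: bs => //= b bs IH; lia. Qed.

Lemma code_inj : injective code.
Proof.
elim=> [|b bs IH] [|b' bs'] //=.
- have := code_gt0 bs'; case: b'; lia.
- have := code_gt0 bs; case: b; lia.
- move=> e; have [eb ec] : b = b' /\ code bs = code bs' by case: b b' e => [] []; lia.
  by rewrite eb (IH _ ec).
Qed.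

Lemma code_lt bs : code bs < 2 ^ (size bs).+1.
Proof. elim: bs => //= b bs IH; rewrite (expnS 2 (size bs).+1); case: b; lia. Qed.

Lemma encinj (T : finType) : injective (fun s : T => nseq (enum_rank s) true).
Proof.
move=> s t /(congr1 size); rewrite !size_nseq => e.
by apply: enum_rank_inj; apply: ord_inj.
Qed.

Definition swA (Sigma : finType) (a : Sigma) (L : seq Sigma -> Prop) (N n : nat) : enc_aut Sigma :=
  @EncAut Sigma ((minn n N).-tuple Sigma) (nseq_tuple (minn n N) a)
    (fun s c => insubd s (behead (rcons s c)))
    (fun s => L (nseq (n - minn n N) a ++ s))
    (fun s => nseq (enum_rank s) true) (@encinj _).

Lemma swA_run (Sigma : finType) (a : Sigma) L N n w :
  val (arun (swA a L N n) w) = lastn a (minn n N) w.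
Proof.
elim/last_ind: w => [|w c IH].
  by rewrite lastn_char /= drop0 cats0.
rewrite /arun foldl_rcons -/(arun _ w) /= insubdK.
  by rewrite IH lastn_rcons.
by rewrite unfold_in /= size_behead size_rcons size_tuple.
Qed.

Lemma fwd (Sigma : finType) (a : Sigma) (L : seq Sigma -> Prop) (A : dfa Sigma) :
  minimal_dfa A L -> F_O1 a L ->
  forall x y z : seq Sigma, size x = size y -> size z = #|dstate A| ->
     drun A (x ++ z) = drun A (y ++ z).
Proof.
move=> hmin [An [sw [c [n0 sp]]]].
pose M' := 2 ^ c.+1.
have stepB : forall n, n0 <= n -> forall w w' s, M' <= size s -> forall v,
    L (lastn a n (w ++ s ++ v)) <-> L (lastn a n (w' ++ s ++ v)).
  move=> n hn.
  pose R0 := fun w w' : seq Sigma => forall v, L (lastn a n (w ++ v)) <-> L (lastn a n (w' ++ v)).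
  have key : forall p q, Rk (@rcons Sigma) R0 M' p q.
    move=> p q; apply: (@chain _ _ (@rcons Sigma) R0 M' _ _ _ _ _ n).
    - by move=> w v.
    - by move=> w w' H v; split => /H.
    - by move=> w1 w2 w3 H1 H2 v; split => [/H1/H2|/H2/H1].
    - by move=> w w' s H v; rewrite !cat_rcons; apply: H.
    - move=> f.
      pose st i := arun (An n) (f i).
      have hc : forall i, code (aenc (st i)) < M'.
        move=> i; apply: leq_trans (code_lt _) _; apply: leq_pexp2l => //; exact: (sp n hn).
      pose g (i : 'I_M'.+1) : 'I_M' := Ordinal (hc i).
      have ng : ~ injective g.
        move=> /leq_card; rewrite !card_ord; lia.
      have [i [j [ij gij]]] : exists i j, i <> j /\ g i = g j.
        apply: NNPP => H; apply: ng => i j e; apply: NNPP => ne; apply: H; by exists i, j.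
      have est : st i = st j.
        apply: aenc_inj; apply: code_inj; by have := congr1 val gij.
      have Rij : R0 (f i) (f j).
        move=> v; split => /(sw n) H; apply/(sw n); move: H;
          by rewrite /arun !foldl_cat -/(arun _ (f i)) -/(arun _ (f j)) -/(st i) -/(st j) est.
      case: (ltngtP i j) => [lt|gt|eq].
      + exists i, j; split => //; apply/andP; split => //; rewrite -ltnS; exact: ltn_ord j.
      + exists j, i; split; first by apply/andP; split => //; rewrite -ltnS; exact: ltn_ord i.
        by move=> v; split => /Rij.
      + by exfalso; apply: ij; apply: val_inj.
    - apply/Rk_char => u hu v; rewrite !foldl_rcons_cat -!catA.
      have hl : n <= size (u ++ v) by rewrite size_cat hu leq_addr.
      by rewrite !(lastn_cat_long _ _ hl).
  move=> w w' s hs v.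
  have hsz : size (drop (size s - M') s) = M' by rewrite size_drop; lia.
  move/Rk_char: (key (w ++ take (size s - M') s) (w' ++ take (size s - M') s)) => /(_ _ hsz v).
  by rewrite !foldl_rcons_cat -!catA !(catA (take _ _)) cat_take_drop.
have [acc _] := hmin.
have claim1 : forall x y s, size x = size y -> maxn n0 M' <= size s ->
    drun A (x ++ s) = drun A (y ++ s).
  move=> x y s hxy hs; apply: (min_nerode hmin) => v.
  have e : forall w, foldl (@ddelta _ A) (drun A w) v = drun A (w ++ v)
    by move=> w; rewrite /drun foldl_cat.
  rewrite !e.
  split => /acc H; apply/acc; move: H; rewrite -!catA.
  - pose n := size (x ++ s ++ v).
    have ex : lastn a n (x ++ s ++ v) = x ++ s ++ v by rewrite /n lastn_id.
    have ey : lastn a n (y ++ s ++ v) = y ++ s ++ v by rewrite /n !size_cat hxy -!size_cat lastn_id.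
    have h1 : n0 <= n by rewrite /n !size_cat; lia.
    have h2 : M' <= size s by lia.
    rewrite -{1}ex -ey; exact: (stepB n h1 x y s h2 v).1.
  - pose n := size (x ++ s ++ v).
    have ex : lastn a n (x ++ s ++ v) = x ++ s ++ v by rewrite /n lastn_id.
    have ey : lastn a n (y ++ s ++ v) = y ++ s ++ v by rewrite /n !size_cat hxy -!size_cat lastn_id.
    have h1 : n0 <= n by rewrite /n !size_cat; lia.
    have h2 : M' <= size s by lia.
    rewrite -ex -ey; exact: (stepB n h1 x y s h2 v).2.
have keyA : forall x y, size x = size y ->
    Rk (@ddelta _ A) eq #|dstate A| (drun A x) (drun A y).
  move=> x y hxy; apply: (@chain _ _ _ eq _ _ _ _ _ _ (maxn n0 M')).
  - by [].
  - by move=> ? ? ->.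
  - by move=> ? ? ? -> ->.
  - by move=> ? ? ? ->.
  - move=> f.
    pose g (i : 'I_#|dstate A|.+1) := f i.
    have ng : ~ injective g.
      move=> /leq_card; rewrite !card_ord; lia.
    have [i [j [ij gij]]] : exists i j, i <> j /\ g i = g j.
      apply: NNPP => H; apply: ng => i j e; apply: NNPP => ne; apply: H; by exists i, j.
    case: (ltngtP i j) => [lt|gt|eq].
    + exists i, j; split => //; apply/andP; split => //; rewrite -ltnS; exact: ltn_ord j.
    + exists j, i; split; first by apply/andP; split => //; rewrite -ltnS; exact: ltn_ord i.
      by [].
    + by exfalso; apply: ij; apply: val_inj.
  - apply/Rk_char => u hu; rewrite /drun -!foldl_cat; apply: claim1 => //; by rewrite hu.
move=> x y z hxy hz.
move/Rk_char: (keyA x y hxy) => /(_ z hz).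
by rewrite /drun !foldl_cat.
Qed.

Lemma bwd (Sigma : finType) (a : Sigma) (L : seq Sigma -> Prop) (A : dfa Sigma) :
  minimal_dfa A L ->
  (forall x y z : seq Sigma, size x = size y -> size z = #|dstate A| ->
     drun A (x ++ z) = drun A (y ++ z)) -> F_O1 a L.
Proof.
move=> hmin H; have [acc _] := hmin.
pose N := #|dstate A|.
exists (swA a L N); split.
  move=> n w; rewrite /= swA_run.
  suff e : drun A (nseq (n - minn n N) a ++ lastn a (minn n N) w) = drun A (lastn a n w).
    split => h; [apply/acc; rewrite -e; exact/acc | apply/acc; rewrite e; exact/acc].
  rewrite -(cat_take_drop (n - minn n N) (lastn a n w)) lastn_split ?geq_minl //.
  case: (leqP N n) => hNn.
    have eK : minn n N = N by lia.
    apply: H; first by rewrite size_nseq size_takel ?size_lastn //; lia.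
    rewrite size_lastn; rewrite /N in eK hNn *; lia.
  have eK : minn n N = n by lia.
  by rewrite subnn take0.
exists (#|Sigma| ^ N), N => n hn s.
rewrite /= size_nseq.
apply: ltnW; apply: leq_trans (ltn_ord (enum_rank s)) _.
rewrite card_tuple.
have -> : minn n N = N by lia.
by [].
Qed.

Theorem proposition6p5 (Sigma : finType) (a : Sigma) (L : seq Sigma -> Prop)
    (A : dfa Sigma) :
  minimal_dfa A L ->
  (F_O1 a L <->
   forall x y z : seq Sigma, size x = size y -> size z = #|dstate A| ->
     drun A (x ++ z) = drun A (y ++ z)).
Proof.
move=> hmin; split; [exact: fwd | exact: bwd].
Qed.
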